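(* Let $G=(V,E)$ be an undirected graph with edge capacities $u_e\in\mathbb{Z}_{\ge0}$ for all $e\in E$, sources $s_1,s_2$, sinks $t_1,t_2$, and let $k_1,k_2\in\mathbb{Z}_{\ge0}$. Let $d_1,d_2>0$ be demands with $d_1/d_2=k_1/k_2$. Then a maximal totally uniform $(k_1,k_2)$-splittable flow provides a $\tfrac12$-approximation of a maximal concurrent $(k_1,k_2)$-splittable flow for these demands: its concurrent objective value $\min_{i\in\{1,2\}}\tfrac{1}{d_i}\sum_{j=1}^{k_i}f^i_j$ is at least half the maximum of this objective over all $(k_1,k_2)$-splittable flows.
   Context: A $(k_1,k_2)$-splittable flow consists of $k_1$ $s_1$--$t_1$-paths carrying flow values $f^1_1,\dots,f^1_{k_1}\ge0$ and $k_2$ $s_2$--$t_2$-paths carrying flow values $f^2_1,\dots,f^2_{k_2}\ge0$, such that for every edge $e$ the total flow of all paths (counted with multiplicity, both commodities) containing $e$ is at most $u_e$; paths may repeat and values may be $0$ (no uniformity required). It is totally uniform if all $k_1+k_2$ paths carry the same value $x$; a maximal totally uniform flow is one maximizing $x$. A maximal concurrent $(k_1,k_2)$-splittable flow for demands $d_1,d_2$ is a $(k_1,k_2)$-splittable flow maximizing $\min_{i\in\{1,2\}}\frac{1}{d_i}\sum_{j=1}^{k_i}f^i_j$. *)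

(* Defs.v *)
From HB Require Import structures.
From mathcomp Require Import all_boot all_order all_algebra.
From mathcomp Require Import reals.
Set Implicit Arguments. Unset Strict Implicit. Unset Printing Implicit Defensive.
Import Order.TTheory GRing.Theory Num.Theory.
Local Open Scope ring_scope.

(* An undirected (multi)graph: vertices V, edges E, each edge e has the
   unordered pair of endpoints given by [ends e] (order irrelevant). *)
Section Flows.
Variables (V E : finType) (ends : E -> V * V).

Definition joins (e : E) (x y : V) : bool :=
  (ends e == (x, y)) || (ends e == (y, x)).

(* p is a (simple) s--t path: a list of edges e_1 .. e_m together with
   pairwise distinct vertices s = v_0, v_1, .., v_m = t such that e_i joins
   v_{i-1} and v_i. *)
Definition is_path (s t : V) (p : seq E) : Prop :=
  exists vs : seq V,
    [/\ size vs = size p, uniq (s :: vs), last s vs = t &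
        all (fun evw : E * (V * V) => joins evw.1 evw.2.1 evw.2.2)
            (zip p (zip (s :: vs) vs))].

Variable R : realType.
Variables (u : E -> nat) (s1 t1 s2 t2 : V) (k1 k2 : nat).

Record kflow := KFlow {
  path1 : 'I_k1 -> seq E;
  val1  : 'I_k1 -> R;
  path2 : 'I_k2 -> seq E;
  val2  : 'I_k2 -> R }.

Definition load (F : kflow) (e : E) : R :=
  \sum_(j < k1 | e \in path1 F j) val1 F j +
  \sum_(j < k2 | e \in path2 F j) val2 F j.

Definition splittable (F : kflow) : Prop :=
  [/\ forall j, is_path s1 t1 (path1 F j),
      forall j, is_path s2 t2 (path2 F j),
      forall j, 0 <= val1 F j,
      forall j, 0 <= val2 F j &
      forall e, load F e <= (u e)%:R].

Definition totally_uniform (F : kflow) (x : R) : Prop :=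
  [/\ splittable F, forall j, val1 F j = x & forall j, val2 F j = x].

Definition max_totally_uniform (F : kflow) (x : R) : Prop :=
  totally_uniform F x /\ forall (G : kflow) (y : R), totally_uniform G y -> y <= x.

Definition concurrent_value (d1 d2 : R) (F : kflow) : R :=
  Num.min ((\sum_(j < k1) val1 F j) / d1) ((\sum_(j < k2) val2 F j) / d2).
End Flows.

(* Main.v *)
Require Import Defs.
From HB Require Import structures.
From mathcomp Require Import all_boot all_order all_algebra.
From mathcomp Require Import reals.
Import Order.TTheory GRing.Theory Num.Theory.
Local Open Scope ring_scope.
From mathcomp Require Import ring lra.

Lemma assign (R : realType) (n : nat) (y : R) : 0 < y -> forall m (g : 'I_n -> R),
  (forall j, 0 <= g j) -> m%:R * y + n%:R * y <= \sum_j g j ->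
  exists s : 'I_m -> 'I_n, forall P : pred 'I_n,
    \sum_(i < m | P (s i)) y <= \sum_(j | P j) g j.
Proof.
move=> y0; elim=> [|m IH] g g0 hs.
  have f : 'I_0 -> 'I_n by case.
  exists f => P; rewrite big_ord0; exact: sumr_ge0.
have [/existsP [j hj]|hn] := boolP [exists j, y <= g j]; last first.
  exfalso.
  have : \sum_j g j <= \sum_(j < n) y.
    apply: ler_sum => j _; apply: ltW; rewrite ltNge.
    by apply/negP => h; move/negP: hn; apply; apply/existsP; exists j.
  rewrite sumr_const card_ord -mulr_natl => h.
  have : 0 < m.+1%:R * y by apply: mulr_gt0 => //; rewrite ltr0n.
  lra.
pose g' := fun j' => g j' - (j' == j)%:R * y.
have g'0 : forall j', 0 <= g' j'.
  move=> j'; rewrite /g'; case: eqP => [->|_]; first by rewrite mul1r subr_ge0.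
  by rewrite mul0r subr0.
have sg : forall P : pred 'I_n, \sum_(j' | P j') g' j' = \sum_(j' | P j') g j' - (P j)%:R * y.
  move=> P; rewrite /g' sumrB; congr (_ - _).
  case Pj: (P j).
    rewrite (bigD1 j) //= eqxx mul1r big1 ?addr0 // => i /andP [_ /negbTE ->].
    by rewrite mul0r.
  rewrite mul0r big1 // => i Pi; case: eqP Pi => [->|_]; first by rewrite Pj.
  by rewrite mul0r.
have [s hs'] : exists s : 'I_m -> 'I_n, forall P : pred 'I_n,
    \sum_(i < m | P (s i)) y <= \sum_(j | P j) g' j.
  apply: IH => //; move: (sg predT) hs => /= ->.
  rewrite -[m.+1]addn1 natrD; lra.
exists (fun i : 'I_m.+1 => if (insub (val i) : option 'I_m) is Some i' then s i' else j).
move=> P; rewrite big_mkcond big_ord_recr /=.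
have -> : (insub m : option 'I_m) = None by rewrite insubF // ltnn.
rewrite -big_mkcond /=.
have -> : \sum_(i < m | P (if (insub (widen_ord (leqnSn m) i : nat) : option 'I_m) is Some i' then s i' else j)) y
   = \sum_(i < m | P (s i)) y.
  apply: eq_bigl => i /=; rewrite insubT //= => h.
  by congr (P (s _)); apply: val_inj.
move: (hs' P); rewrite sg.
case: (P j) => /=; lra.
Qed.

Theorem mainTheorem8 (V E : finType) (ends : E -> V * V) (R : realType)
  (u : E -> nat) (s1 t1 s2 t2 : V) (k1 k2 : nat) (d1 d2 : R) :
  0 < d1 -> 0 < d2 -> d1 * k2%:R = d2 * k1%:R ->
  forall (F : kflow E R k1 k2) (x : R),
    max_totally_uniform ends u s1 t1 s2 t2 F x ->
    forall G : kflow E R k1 k2, splittable ends u s1 t1 s2 t2 G ->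
      concurrent_value d1 d2 G / 2 <= concurrent_value d1 d2 F.
Proof.
move=> d10 d20 hd F x [[[_ _ F1 F2 _] Fx1 Fx2] Fmax] G [Gp1 Gp2 G1 G2 Gl].
have cF0 : 0 <= concurrent_value d1 d2 F.
  rewrite /concurrent_value le_min; apply/andP; split; apply: divr_ge0;
    by [apply: sumr_ge0 => j _ | apply: ltW].
rewrite /concurrent_value in cF0 *.
set A1 := \sum_(j < k1) Defs.val1 G j; set A2 := \sum_(j < k2) val2 G j.
set c := Num.min (A1 / d1) (A2 / d2).
have [c0|c0] := leP c 0; first lra.
have hc1 : c <= A1 / d1 by rewrite /c ge_min lexx.
have hc2 : c <= A2 / d2 by rewrite /c ge_min lexx orbT.
have A1ge : c * d1 <= A1 by rewrite -ler_pdivlMr.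
have A2ge : c * d2 <= A2 by rewrite -ler_pdivlMr.
have k1p : (0 < k1)%N.
  rewrite lt0n; apply/eqP => k10.
  have : A1 = 0 by rewrite /A1 big1 // => j; move: (ltn_ord j); rewrite {2}k10.
  nra.
have k2p : (0 < k2)%N.
  rewrite lt0n; apply/eqP => k20.
  have : A2 = 0 by rewrite /A2 big1 // => j; move: (ltn_ord j); rewrite {2}k20.
  nra.
set K1 := (k1%:R : R); set K2 := (k2%:R : R).
have K10 : 0 < K1 by rewrite ltr0n.
have K20 : 0 < K2 by rewrite ltr0n.
set y := c * d1 / (2 * K1).
have y0 : 0 < y by rewrite /y; apply: divr_gt0; [exact: mulr_gt0|lra].
have e1 : K1 * y + K1 * y = c * d1 by rewrite /y; field; lra.
have e2 : K2 * y + K2 * y = c * d2.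
  have -> : K2 * y + K2 * y = c * (d1 * K2) / K1 by rewrite /y; field; lra.
  by rewrite hd; field; lra.
have [s1' hs1] := @assign _ _ y y0 k1 (Defs.val1 G) G1 (ltac:(rewrite -/K1 -/A1; lra)).
have [s2' hs2] := @assign _ _ y y0 k2 (val2 G) G2 (ltac:(rewrite -/K2 -/A2; lra)).
pose H := KFlow (fun i => path1 G (s1' i)) (fun _ => y) (fun i => path2 G (s2' i)) (fun _ => y).
have Htu : totally_uniform ends u s1 t1 s2 t2 H y.
  split => //; split => // [j|j|j|j|e]; rewrite /=.
  - exact: Gp1.
  - exact: Gp2.
  - exact: ltW.
  - exact: ltW.
  apply: le_trans (Gl e); rewrite /load /=.
  apply: lerD; [exact: (hs1 (fun j => e \in path1 G j)) | exact: (hs2 (fun j => e \in path2 G j))].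
have yx := Fmax H y Htu.
rewrite le_min; apply/andP; split.
- under eq_bigr do rewrite Fx1.
  rewrite sumr_const card_ord -[x *+ k1]mulr_natl -/K1.
  have -> : c / 2 = K1 * y / d1 by rewrite /y; field; lra.
  rewrite ler_pM2r ?invr_gt0 //; nra.
- under eq_bigr do rewrite Fx2.
  rewrite sumr_const card_ord -[x *+ k2]mulr_natl -/K2.
  have -> : c / 2 = K2 * y / d2.
    have -> : K2 * y / d2 = c * (d1 * K2) / (2 * K1 * d2) by rewrite /y; field; lra.
    by rewrite hd; field; lra.
  rewrite ler_pM2r ?invr_gt0 //; nra.
Qed.
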